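(* Let $C_n(a,b)$ be a connected $2$-regular circulant digraph, let $l\ge1$, $0\le k\le l$ with $la+k(b-a)=\omega n$ for an integer $\omega$, and let $w\in\mathbb{W}_2(l,k)$ with $w=x^r$ where $r$ is the repetition number of $w$. Then for any vertex $v$, the periodic orbit $p=\varphi(w,v)$ is primitive if and only if $\gcd(r,\omega)=1$. More generally, if $p=q^t$ for some periodic orbit $q$ and positive integer $t$, then $q$ is primitive if and only if $t=\gcd(r,\omega)$.
   Context: Let $n\ge 2$ and $0<a<b<n$ be integers with $\gcd(n,a,b)=1$. $C_n(a,b)$ has vertex set $\mathbb{Z}_n$ and directed bonds $(v,v+a)$, $(v,v+b)$ (addition mod $n$), with step sizes $a$, $b$. A path of length $l$ is a sequence of bonds $(e_1,\dots,e_l)$ with the terminus of $e_j$ equal to the origin of $e_{j+1}$; its $b$-count is the number of bonds of step size $b$; its step sequence is the sequence of step sizes; a circuit is a path whose last terminus equals its first origin. A periodic orbit is an equivalence class of circuits under cyclic rotation $(e_1,\dots,e_l)\mapsto(e_2,\dots,e_l,e_1)$. For a circuit $c$, $c^t$ is the concatenation of $t$ copies, and for an orbit $q=[c]$, $q^t=[c^t]$. An orbit is primitive if it is not $[c_0^r]$ for a circuit $c_0$ and $r>1$. $\mathbb{W}_2(l,k)$ is the set of words over $\{a,b\}$ of length $l$ with exactly $k$ letters $b$; the repetition number of a word $w$ is the largest $r$ with $w=x^r$ for some word $x$ (then $x$ is primitive, i.e., not a proper power). Identifying letters $a,b$ with step sizes $a,b$, $\psi(w,v)$ is the unique path starting at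 vertex $v$ with step sequence $w$; when it is a circuit, $\varphi(w,v)=[\psi(w,v)]$. *)

(* Defs.v *)
From mathcomp Require Import all_boot all_order all_algebra.
Set Implicit Arguments. Unset Strict Implicit. Unset Printing Implicit Defensive.

(* Circulant digraph C_n(a,b): vertices are the naturals v < n (= Z_n),
   a bond is a pair (origin, letter) where letter false = step a, true = step b.
   Since a <> b (mod n), a bond (v, v+a) / (v, v+b) is determined by its origin
   and its step size. *)
Definition bond := (nat * bool)%type.

Definition step (a b : nat) (s : bool) : nat := if s then b else a.

Definition origin (e : bond) : nat := e.1.
Definition terminus (n a b : nat) (e : bond) : nat := (e.1 + step a b e.2) %% n.

Definition is_bond (n : nat) (e : bond) : bool := e.1 < n.

Definition consec (n a b : nat) (e f : bond) : bool := terminus n a b e == origin f.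

Definition is_circuit (n a b : nat) (c : seq bond) : bool :=
  [&& c != [::], all (is_bond n) c & cycle (consec n a b) c].

Definition cpower (c : seq bond) (t : nat) : seq bond := flatten (nseq t c).

Definition same_orbit (c d : seq bond) : Prop := exists i, d = rot i c.

Definition primitive_orbit (n a b : nat) (c : seq bond) : Prop :=
  ~ exists (c0 : seq bond) (r : nat),
      [/\ is_circuit n a b c0, 1 < r & same_orbit (cpower c0 r) c].

Definition wpower (x : seq bool) (r : nat) : seq bool := flatten (nseq r x).

Definition repetition_number (w : seq bool) (r : nat) : Prop :=
  (exists x, w = wpower x r) /\ (forall x r', w = wpower x r' -> r' <= r).

Fixpoint psi (n a b : nat) (w : seq bool) (v : nat) : seq bond :=
  match w with
  | [::] => [::]
  | s :: w' => (v, s) :: psi n a b w' ((v + step a b s) %% n)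
  end.

(* Main.v *)
Require Import Defs.
From mathcomp Require Import all_boot all_order all_algebra.
From mathcomp Require Import zify.
Set Implicit Arguments. Unset Strict Implicit. Unset Printing Implicit Defensive.

Definition pw (T : Type) (s : seq T) m := flatten (nseq m s).

Section Gen.
Variable T : Type.
Variable x0 : T.
Implicit Types s y : seq T.


Lemma pwS s m : pw s m.+1 = s ++ pw s m. Proof. by []. Qed.
Lemma pw1 s : pw s 1 = s. Proof. by rewrite pwS cats0. Qed.
Lemma size_pw s m : size (pw s m) = m * size s.
Proof. by elim: m => //= m IH; rewrite pwS size_cat IH mulSn. Qed.
Lemma pwD s m q : pw s (m + q) = pw s m ++ pw s q.
Proof. by elim: m => //= m IH; rewrite addSn !pwS IH catA. Qed.
Lemma pwM s p q : pw s (p * q) = pw (pw s p) q.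
Proof. elim: q => [|q IH]; first by rewrite muln0. by rewrite mulnS pwD IH. Qed.
Lemma map_pw (U : Type) (h : T -> U) s m : map h (pw s m) = pw (map h s) m.
Proof. by elim: m => //= m IH; rewrite !pwS map_cat IH. Qed.

Lemma nth_pw y m k : k < m * size y -> nth x0 (pw y m) k = nth x0 y (k %% size y).
Proof.
elim: m k => [|m IH] k //; rewrite mulSn pwS nth_cat => Hk.
case: ltnP => H; first by rewrite modn_small.
rewrite IH; last by rewrite -(ltn_add2l (size y)) subnKC.
by rewrite -{2}(subnK H) modnDr.
Qed.

Definition fe s i := nth x0 s (i %% size s).
Definition per s p := forall i, fe s (i + p) = fe s i.

Lemma fe_pw y m i : 0 < m -> fe (pw y m) i = fe y i.
Proof.
move=> Hm; rewrite /fe size_pw.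
case Hy: (size y) => [|sy].
  by rewrite !nth_default ?size_pw ?Hy ?muln0.
rewrite nth_pw ?Hy; last by rewrite ltn_mod muln_gt0 Hm.
by rewrite modn_dvdm // dvdn_mull.
Qed.

Lemma per_pw y m p : 0 < m -> per (pw y m) p <-> per y p.
Proof. by move=> Hm; split=> H i; have := H i; rewrite !fe_pw. Qed.

Lemma per_size s : per s (size s).
Proof. by move=> i; rewrite /fe modnDr. Qed.

Lemma per_mul s p k : per s p -> per s (k * p).
Proof.
move=> H; elim: k => [|k IH] i; first by rewrite addn0.
by rewrite mulSn addnA IH H.
Qed.

Lemma per_sub s p q : per s p -> per s q -> q <= p -> per s (p - q).
Proof. by move=> Hp Hq Hqp i; rewrite -Hq -addnA subnK. Qed.

Lemma per_gcd s p q : per s p -> per s q -> per s (gcdn p q).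
Proof.
move=> Hp Hq; case: (posnP p) => [->|p0]; first by rewrite gcd0n.
case: (egcdnP q p0) => km kn E _.
have -> : gcdn p q = km * p - kn * q by rewrite E addKn.
apply: per_sub; try exact: per_mul.
by rewrite E leq_addr.
Qed.

Lemma per_map (U : Type) (u0 : U) (h : T -> U) s p :
  per s p -> forall i, nth u0 (map h s) ((i + p) %% size s) = nth u0 (map h s) (i %% size s).
Proof.
move=> H i; case: (posnP (size s)) => [/size0nil E|s0]; first by rewrite E !nth_nil.
by rewrite !(nth_map x0) ?ltn_mod //; congr h; apply: H.
Qed.

Lemma nth_rot k s i : k <= size s -> i < size s ->
  nth x0 (rot k s) i = nth x0 s ((i + k) %% size s).
Proof.
move=> Hk Hi; rewrite /rot nth_cat size_drop nth_drop.
case: ltnP => H.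
  rewrite modn_small [i + k]addnC //; lia.
have E : i + k = (i - (size s - k)) + size s by lia.
rewrite E modnDr modn_small; last by lia.
rewrite nth_take //; lia.
Qed.

Lemma fe_rot k s i : k < size s -> fe (rot k s) i = fe s (i + k).
Proof.
move=> Hk; rewrite /fe size_rot.
have s0 : 0 < size s by apply: leq_ltn_trans Hk.
by rewrite nth_rot ?ltn_mod // 1?ltnW // modnDml.
Qed.

Lemma per_rot k s p : per s p -> per (rot k s) p.
Proof.
move=> H; case: (ltnP k (size s)) => Hk; last by rewrite rot_oversize.
by move=> i; rewrite !fe_rot // addnAC H.
Qed.

Lemma per_rot_inv k s p : per (rot k s) p -> per s p.
Proof.
by move=> H; rewrite -(rotK k s) /rotr; apply: per_rot.
Qed.

Lemma per_pow s p : 0 < p -> p %| size s -> per s p -> s = pw (take p s) (size s %/ p).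
Proof.
move=> p0 Hd H.
case: (posnP (size s)) => [/size0nil E|s0]; first by rewrite E /= div0n.
have Hp : p <= size s by apply: dvdn_leq.
apply: (@eq_from_nth _ x0).
  by rewrite size_pw size_take_min (minn_idPl Hp) divnK.
move=> i Hi.
rewrite nth_pw; last by rewrite size_take_min (minn_idPl Hp) divnK.
rewrite size_take_min (minn_idPl Hp) nth_take ?ltn_mod //.
have := per_mul (i %/ p) H (i %% p).
have Hm : i %% p < size s by apply: leq_trans Hp; rewrite ltn_mod.
by rewrite /fe addnC -divn_eq (modn_small Hi) (modn_small Hm).
Qed.

End Gen.

Set Implicit Arguments. Unset Strict Implicit. Unset Printing Implicit Defensive.

Section Prob.
Variables n a b : nat.

Lemma pw_circuit (y : seq bond) m : 1 < m -> is_circuit n a b (pw y m) -> is_circuit n a b y.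
Proof.
case: m => // [[//|m]] _ /and3P [Hne].
rewrite !pwS !all_cat => /and3P [Hy _ _].
case: y Hne Hy => [|e y]; first by move=> Hne; rewrite -size_eq0 size_pw muln0 in Hne.
move=> _ Hy; rewrite /is_circuit Hy /= => Hc.
have := Hc; rewrite rcons_cat -cat_cons cat_path => /andP [Hp].
rewrite /= => /andP [Hl _].
by rewrite rcons_path Hp.
Qed.

Definition S (u : seq bool) := sumn (map (step a b) u).

Lemma S_cat u1 u2 : S (u1 ++ u2) = S u1 + S u2.
Proof. by rewrite /S map_cat sumn_cat. Qed.

Lemma S_pw u m : S (pw u m) = m * S u.
Proof. by elim: m => // m IH; rewrite pwS S_cat IH mulSn. Qed.

Lemma S_count u : a <= b -> S u = size u * a + count id u * (b - a).
Proof.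
move=> Hab; elim: u => //= s u IH; rewrite /S /= -/(S u) IH /step.
case: s => /=; rewrite mulSn; last by rewrite add0n addnA.
rewrite add1n mulSn; set X := size u * a; set Y := count id u * (b - a); lia.
Qed.

Lemma psi_cat u1 u2 v : 0 < n -> v < n ->
  psi n a b (u1 ++ u2) v = psi n a b u1 v ++ psi n a b u2 ((v + S u1) %% n).
Proof.
move=> n0; elim: u1 v => [|s u IH] v vn /=; first by rewrite addn0 modn_small.
by rewrite IH ?ltn_mod // modnDml addnA.
Qed.

Lemma psi_pw u m v : 0 < n -> v < n -> (v + S u) %% n = v -> psi n a b (pw u m) v = pw (psi n a b u v) m.
Proof. by move=> n0 vn H; elim: m => // m IH; rewrite !pwS psi_cat // H IH. Qed.

Lemma size_psi u v : size (psi n a b u v) = size u.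
Proof. by elim: u v => //= s u IH v; rewrite IH. Qed.

Lemma map_psi u v : map snd (psi n a b u v) = u.
Proof. by elim: u v => //= s u IH v; rewrite IH. Qed.

Lemma psi_bonds u v : 0 < n -> v < n -> all (is_bond n) (psi n a b u v).
Proof. by move=> n0; elim: u v => //= s u IH v vn; rewrite /is_bond vn IH // ltn_mod. Qed.

Lemma psi_path u v e0 : terminus n a b e0 = v -> path (consec n a b) e0 (psi n a b u v).
Proof. by elim: u v e0 => //= s u IH v e0 H; rewrite /consec H eqxx IH. Qed.

Lemma psi_last u v e0 : u != [::] -> terminus n a b (last e0 (psi n a b u v)) = (v + S u) %% n.
Proof.
elim: u v e0 => //= s u IH v e0 _.
case: u IH => [|s' u] IH; first by rewrite /terminus /S /= addn0.
by rewrite IH // modnDml -addnA.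
Qed.

Lemma psi_circuit u v : 0 < n -> v < n -> u != [::] -> (v + S u) %% n = v ->
  is_circuit n a b (psi n a b u v).
Proof.
move=> n0 vn u0 H; rewrite /is_circuit psi_bonds //.
case: u u0 H => // s u _ H /=.
rewrite rcons_path psi_path //=.
rewrite /consec /origin.
have := psi_last v (v, s) (isT : s :: u != [::]).
by rewrite /= H => ->.
Qed.

End Prob.

Import GRing.Theory Num.Theory.
Local Open Scope ring_scope.

Theorem mainTheorem12 (n a b : nat) (l k : nat) (omega : int)
    (w x : seq bool) (r : nat) (v : nat) :
  (2 <= n)%N -> (0 < a)%N -> (a < b)%N -> (b < n)%N ->
  gcdn n (gcdn a b) = 1%N ->
  (1 <= l)%N -> (k <= l)%N ->
  (l%:Z * a%:Z + k%:Z * (b%:Z - a%:Z) = omega * n%:Z) ->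
  size w = l -> count id w = k ->
  w = wpower x r -> repetition_number w r ->
  (v < n)%N ->
  (primitive_orbit n a b (psi n a b w v) <-> gcdz r%:Z omega = 1)
  /\
  (forall (c : seq bond) (t : nat),
     is_circuit n a b c -> (0 < t)%N ->
     same_orbit (cpower c t) (psi n a b w v) ->
     (primitive_orbit n a b c <-> t%:Z = gcdz r%:Z omega)).
Proof.
move=> n2 a0 ab bn _ l1 kl Heq sw cw wx [_ rmax] vn.
have n0 : (0 < n)%N by apply: leq_trans n2.
have [o Eo Ho] : exists2 o : nat, omega = Posz o & (l * a + k * (b - a) = o * n)%N.
  case: omega Heq => o Heq; last by exfalso; nia.
  by exists o => //; nia.
subst omega.
have -> : gcdz r%:Z (Posz o) = (gcdn r o)%:Z by [].
have Epz : forall p q : nat, (Posz p = Posz q) <-> p = q.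
  by move=> p q; split=> [[]|->].
rewrite Epz.
have hx := (0%N, false) : bond.
set m := size x.
have Hl : l = (r * m)%N by rewrite -sw wx /wpower -/(pw x r) size_pw.
have r0 : (0 < r)%N by case: (posnP r) Hl => // ->; lia.
have m0 : (0 < m)%N by case: (posnP m) Hl => // ->; lia.
set Sx := S a b x.
have HrS : (r * Sx = o * n)%N.
  by rewrite -Ho -sw -cw -S_count ?(ltnW ab) // wx /wpower -/(pw x r) S_pw.
set g := gcdn r o.
have g0 : (0 < g)%N by rewrite gcdn_gt0 r0.
set j := (r %/ g)%N.
set o1 := (o %/ g)%N.
have Erj : r = (j * g)%N by rewrite divnK // dvdn_gcdl.
have Eo1 : o = (o1 * g)%N by rewrite divnK // dvdn_gcdr.
have j0 : (0 < j)%N by move: r0; rewrite Erj muln_gt0 => /andP [].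
have cop : coprime j o1.
  rewrite /coprime; apply/eqP; apply/eqP; rewrite -(eqn_pmul2r g0) muln_gcdl -Erj -Eo1 mul1n.
  by [].
have HjS : (j * Sx = o1 * n)%N.
  apply/eqP; rewrite -(eqn_pmul2r g0); apply/eqP.
  rewrite mulnAC -Erj HrS Eo1; lia.
have Hv : ((v + S a b (pw x j)) %% n = v)%N.
  by rewrite S_pw HjS addnC modnMDl modn_small.
set Q := psi n a b (pw x j) v.
have HP : psi n a b w v = pw Q g.
  by rewrite wx /wpower -/(pw x r) Erj pwM psi_pw.
have sQ : size Q = (j * m)%N by rewrite size_psi size_pw.
have Qprim : forall d, per (0%N, false) Q d -> (0 < d)%N -> (d < j * m)%N -> False.
  move=> d Hd d0 dlt.
  have H1 : per false (pw x j) d.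
    have := per_map false snd Hd; rewrite map_psi size_psi => H i; exact: H i.
  have H2 : per false x d by move: H1; rewrite per_pw.
  have H3 := per_gcd H2 (per_size false x).
  set e := gcdn d m in H3.
  have e0 : (0 < e)%N by rewrite gcdn_gt0 d0.
  have Hx := per_pow e0 (dvdn_gcdr d m) H3.
  have := rmax (take e x) ((m %/ e) * r)%N.
  rewrite /wpower -/(pw (take e x) _) pwM -Hx wx => /(_ erefl) Hle.
  have Hme : (m %/ e <= 1)%N by rewrite -(leq_pmul2r r0) mul1n.
  have Eme : e = m.
    have Hem : (e <= m)%N by apply: dvdn_leq m0 (dvdn_gcdr d m).
    have Hme2 : m = (m %/ e * e)%N by rewrite divnK // dvdn_gcdr.
    move: Hme Hme2; case: (m %/ e)%N => [|[|q]] //; first by move=> _ E; rewrite E in m0.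
    by rewrite mul1n => _ ->.
  have md : (m %| d)%N by rewrite -Eme dvdn_gcdl.
  set h := (d %/ m)%N.
  have Ed : d = (h * m)%N by rewrite divnK.
  have hj : (0 < h < j)%N.
    apply/andP; split; first by move: d0; rewrite Ed muln_gt0 => /andP [].
    by rewrite -(ltn_pmul2r m0) -Ed.
  have E0 := Hd 0%N.
  rewrite /fe add0n mod0n modn_small ?sQ // in E0.
  have [s0 [x' Exx]] : exists s0 x', x = s0 :: x'.
    by move: m0; rewrite /m; case: (x) => [|s0' x''] // _; exists s0', x''.
  have head : forall q vv, (0 < q)%N -> (vv < n)%N ->
      nth (0%N, false) (psi n a b (pw x q) vv) 0 = (vv, s0).
    by move=> [|q] // vv _ vvn; rewrite pwS Exx.
  rewrite /Q (head j v) // in E0.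
  move: E0.
  have -> : pw x j = pw x h ++ pw x (j - h) by rewrite -pwD subnKC // ltnW //; case/andP: hj.
  rewrite psi_cat // nth_cat size_psi size_pw -/m -Ed ltnn subnn.
  rewrite head ?ltn_mod //; last by case/andP: hj => _ hj; rewrite subn_gt0.
  case=> Ev.
  have : (S a b (pw x h) %% n = 0 %% n)%N.
    apply/eqP; rewrite -(eqn_modDl v) addn0 (modn_small vn); apply/eqP.
    exact: Ev.
  rewrite mod0n S_pw -/Sx => /eqP; rewrite -/(dvdn n _) => /dvdnP [c Hc].
  have : (j %| h * o1)%N.
    apply/dvdnP; exists c; apply/eqP; rewrite -(eqn_pmul2r n0); apply/eqP.
    by rewrite -mulnA -HjS mulnCA Hc mulnA (mulnC j c).
  rewrite Gauss_dvdl // => /dvdn_leq; case/andP: hj => hp hj /(_ hp); lia.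
have sQ0 : (0 < size Q)%N by rewrite sQ muln_gt0 j0.
have PQ : forall d, per (0%N, false) (psi n a b w v) d -> (0 < d)%N -> (d < size Q)%N -> False.
  by move=> d; rewrite HP per_pw // sQ; apply: Qprim.
have Pc : is_circuit n a b (psi n a b w v).
  apply: psi_circuit => //.
    by rewrite -size_eq0 sw -lt0n.
  by rewrite S_count ?(ltnW ab) // sw cw Ho addnC modnMDl modn_small.
have sP : size (psi n a b w v) = (g * size Q)%N by rewrite HP size_pw.
have circ0 : forall c0 : seq bond, is_circuit n a b c0 -> (0 < size c0)%N.
  by move=> c0 /and3P [H _ _]; rewrite lt0n size_eq0.
split.
  split.
    move=> Hprim; apply/eqP; apply/negPn/negP => g1.
    apply: Hprim; exists Q, g; split.
    - by apply: (@pw_circuit n a b Q g); [lia | rewrite -HP].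
    - lia.
    - by exists 0%N; rewrite rot0 HP.
  move=> g1 [c0 [s [Hc0 s1 [i0 Hi0]]]].
  apply: (PQ (size c0)); last by rewrite -[size Q]mul1n -g1 -sP Hi0 size_rot /cpower -/(pw c0 s) size_pw ltn_Pmull ?circ0.
    rewrite Hi0; apply: per_rot; rewrite /cpower -/(pw c0 s) per_pw; last by lia.
    exact: per_size.
  exact: circ0.
move=> c t Hc t0 [i Hi].
rewrite /cpower -/(pw c t) in Hi.
rewrite Epz.
have HPc : per (0%N, false) (psi n a b w v) (size c).
  by rewrite Hi; apply: per_rot; rewrite per_pw //; apply: per_size.
have HPQ : per (0%N, false) (psi n a b w v) (size Q).
  by rewrite HP per_pw //; apply: per_size.
have He := per_gcd HPc HPQ.
set e := gcdn (size c) (size Q) in He.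
have e0 : (0 < e)%N by rewrite gcdn_gt0 sQ0 orbT.
have Ee : e = size Q.
  have Hle : (e <= size Q)%N by apply: dvdn_leq sQ0 (dvdn_gcdr _ _).
  apply/eqP; rewrite eqn_leq Hle /=.
  by case: leqP => // H; exfalso; apply: (PQ e He e0 H).
have dQc : (size Q %| size c)%N by rewrite -Ee dvdn_gcdl.
set u := (size c %/ size Q)%N.
have Ec : size c = (u * size Q)%N by rewrite divnK.
have Etu : (t * u = g)%N.
  apply/eqP; rewrite -(eqn_pmul2r sQ0) -sP Hi size_rot size_pw Ec mulnA.
  by [].
split.
  move=> Hprim; case: (u =P 1%N) => [u1|u1]; first by rewrite -Etu u1 muln1.
  exfalso; apply: Hprim.
  have u2 : (1 < u)%N.
    rewrite ltn_neqAle eq_sym; apply/andP; split; first exact/eqP.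
    rewrite lt0n; apply/eqP => u0; rewrite u0 muln0 in Etu.
    by rewrite -Etu in g0.
  have Hcq : per (0%N, false) c (size Q).
    have H' : per (0%N, false) (rot i (pw c t)) (size Q) by rewrite -Hi.
    by have := per_rot_inv H'; rewrite per_pw.
  have Ec2 := per_pow sQ0 dQc Hcq.
  exists (take (size Q) c), u; split => //.
    by apply: (@pw_circuit n a b _ u u2); rewrite -Ec2.
  by exists 0%N; rewrite rot0 /cpower -/(pw _ u) -Ec2.
move=> tg [c0 [s [Hc0 s1 [i0 Hi0]]]].
have u1 : u = 1%N.
  by apply/eqP; rewrite -(eqn_pmul2l t0) Etu tg muln1.
apply: (PQ (size c0)).
- rewrite Hi; apply: per_rot; rewrite per_pw //.
  rewrite Hi0; apply: per_rot; rewrite /cpower -/(pw c0 s) per_pw; last by lia.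
  exact: per_size.
- exact: circ0.
- have : size c = (s * size c0)%N by rewrite Hi0 size_rot /cpower -/(pw c0 s) size_pw.
  rewrite Ec u1 mul1n => ->.
  by rewrite ltn_Pmull ?circ0.
Qed.
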